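(* Let $X$ be a finite set with $|X|\geq 2$. Then the $C^*$-algebra $\mathbb{A}_X$ is non-commutative and infinite dimensional.
   Context: For $n\geq 0$, $X^n$ is the set of words of length $n$ in $X$, with $X^0=\{\varnothing\}$. $\mathbb{A}_X$ is the universal $C^*$-algebra generated by elements $\{a_{u,v}: u,v\in X^n,\ n\geq 0\}$ subject to: (i) $a_{\varnothing,\varnothing}=1$; (ii) $a_{u,v}^*=a_{u,v}^2=a_{u,v}$; (iii) for all $n\geq0$, $u,v\in X^n$, $x\in X$: $a_{u,v}=\sum_{y\in X}a_{ux,vy}=\sum_{z\in X}a_{uz,vx}$. *)

(* Defs.v *)
From HB Require Import structures.
From mathcomp Require Import all_boot all_order all_algebra.
From mathcomp Require Import reals.
From mathcomp Require Import complex.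
Set Implicit Arguments. Unset Strict Implicit. Unset Printing Implicit Defensive.
Import Order.TTheory GRing.Theory Num.Theory.
Local Open Scope ring_scope.

Definition cstar_axioms (R : realType) (A : algType R[i])
    (star : A -> A) (nrm : A -> R) : Prop :=
  (forall x, star (star x) = x) /\
  (forall x y, star (x + y) = star x + star y) /\
  (forall (c : R[i]) x, star (c *: x) = Num.conj c *: star x) /\
  (forall x y, star (x * y) = star y * star x) /\
  (forall x, nrm x = 0 -> x = 0) /\
  (forall x y, nrm (x + y) <= nrm x + nrm y) /\
  (forall (c : R[i]) x, ((nrm (c *: x))%:C)%C = `|c| * ((nrm x)%:C)%C) /\
  (forall x y, nrm (x * y) <= nrm x * nrm y) /\
  (forall x, nrm (star x * x) = nrm x ^+ 2) /\
  (forall u : nat -> A,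
      (forall e : R, 0 < e -> exists N, forall m n, (N <= m)%N -> (N <= n)%N ->
         nrm (u m - u n) < e) ->
      exists l : A, forall e : R, 0 < e -> exists N, forall n, (N <= n)%N ->
         nrm (u n - l) < e).

Record cstar_alg (R : realType) := CStarAlg {
  cs_car :> algType R[i];
  cs_star : cs_car -> cs_car;
  cs_norm : cs_car -> R;
  cs_ax : cstar_axioms cs_star cs_norm
}.

Definition is_star_hom (R : realType) (A B : cstar_alg R) (f : A -> B) : Prop :=
  [/\ (forall x y, f (x + y) = f x + f y),
      (forall (c : R[i]) x, f (c *: x) = c *: f x),
      (forall x y, f (x * y) = f x * f y),
      f 1 = 1 &
      (forall x, f (cs_star x) = cs_star (f x))].

(* Words over X are sequences; "u x" (u followed by the letter x) is rcons u x.
   A family of elements a_{u,v} is given as g : seq X -> seq X -> A; only its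
   values at pairs (u,v) with size u = size v are relevant. *)
Definition AX_relations (R : realType) (X : finType) (A : cstar_alg R)
    (g : seq X -> seq X -> A) : Prop :=
  [/\ g [::] [::] = 1,
      (forall u v, size u = size v -> cs_star (g u v) = g u v),
      (forall u v, size u = size v -> g u v * g u v = g u v) &
      (forall u v (x : X), size u = size v ->
          g u v = \sum_(y : X) g (rcons u x) (rcons v y) /\
          g u v = \sum_(z : X) g (rcons u z) (rcons v x))].

Definition is_universal_AX (R : realType) (X : finType) (A : cstar_alg R)
    (g : seq X -> seq X -> A) : Prop :=
  AX_relations g /\
  forall (B : cstar_alg R) (h : seq X -> seq X -> B), AX_relations h ->
    (exists f : A -> B, is_star_hom f /\
        forall u v, size u = size v -> f (g u v) = h u v) /\
    (forall f1 f2 : A -> B, is_star_hom f1 -> is_star_hom f2 ->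
        (forall u v, size u = size v -> f1 (g u v) = h u v) ->
        (forall u v, size u = size v -> f2 (g u v) = h u v) ->
        forall x, f1 x = f2 x).

Definition noncommutative (R : realType) (A : cstar_alg R) : Prop :=
  exists x y : A, x * y <> y * x.

Definition infinite_dimensional (R : realType) (A : cstar_alg R) : Prop :=
  forall n : nat, exists v : 'I_n -> A,
    forall c : 'I_n -> R[i], \sum_(i < n) c i *: v i = 0 -> forall i, c i = 0.

(* Main.v *)
Require Import Defs.
From mathcomp Require Import all_boot all_order all_algebra.
From mathcomp Require Import reals complex.
From HB Require Import structures.
From mathcomp Require Import classical_sets.
From mathcomp Require Import ring lra.
Set Implicit Arguments. Unset Strict Implicit. Unset Printing Implicit Defensive.
Import Order.TTheory GRing.Theory Num.Theory.
Local Open Scope classical_set_scope.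
Local Open Scope ring_scope.

Lemma sq_le (R : realFieldType) (x s : R) : x ^+ 2 <= s ^+ 2 -> 0 <= s -> x <= s.
Proof. move=> h1 h2. nra. Qed.
Section S.
Variable R : realType.
Local Notation C := (R[i]).
Local Notation re := (@complex.Re R).
Local Notation im := (@complex.Im R).
Lemma conjE (c : R[i]) : Num.conj c = conjc c.
Proof.
rewrite {1}[c]complexE complexiE conjC_rect ?complex_real //.
case: c => a b /=. rewrite -complexiE. apply/eqP; rewrite eq_complex /=.
by rewrite ?mul0r ?mul1r ?subr0 ?add0r ?sub0r ?subrr ?oppr0 ?eqxx.
Qed.
Lemma cReD (x y : C) : re (x + y) = re x + re y. Proof. by case: x => a b; case: y => c d. Qed.
Lemma cImD (x y : C) : im (x + y) = im x + im y. Proof. by case: x => a b; case: y => c d. Qed.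
Lemma cReN (x : C) : re (- x) = - re x. Proof. by case: x. Qed.
Lemma cImN (x : C) : im (- x) = - im x. Proof. by case: x. Qed.
Lemma cReM (x y : C) : re (x * y) = re x * re y - im x * im y. Proof. by case: x => a b; case: y => c d. Qed.
Lemma cImM (x y : C) : im (x * y) = re x * im y + im x * re y. Proof. by case: x => a b; case: y => c d. Qed.
Lemma cRej (x : C) : re (conjc x) = re x. Proof. by case: x. Qed.
Lemma cImj (x : C) : im (conjc x) = - im x. Proof. by case: x. Qed.
Lemma cRe0 : re (0 : C) = 0. Proof. by []. Qed.
Lemma cIm0 : im (0 : C) = 0. Proof. by []. Qed.
Lemma cRe_sum (I : Type) (r : seq I) (P : pred I) (F : I -> C) :
  re (\sum_(i <- r | P i) F i) = \sum_(i <- r | P i) re (F i).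
Proof. exact: (big_morph _ cReD cRe0). Qed.
Lemma cIm_sum (I : Type) (r : seq I) (P : pred I) (F : I -> C) :
  im (\sum_(i <- r | P i) F i) = \sum_(i <- r | P i) im (F i).
Proof. exact: (big_morph _ cImD cIm0). Qed.

Definition n2 (c : C) : R := re c ^+ 2 + im c ^+ 2.
Lemma n2_ge0 c : 0 <= n2 c. Proof. by rewrite /n2 addr_ge0 // sqr_ge0. Qed.
Lemma n2_eq0 c : n2 c = 0 -> c = 0.
Proof.
case: c => a b; rewrite /n2 /= => /eqP; rewrite paddr_eq0 ?sqr_ge0 // !sqrf_eq0.
by case/andP => /eqP -> /eqP ->.
Qed.
Lemma n2M x y : n2 (x * y) = n2 x * n2 y.
Proof. rewrite /n2 cReM cImM; ring. Qed.
Lemma normc_n2 (c : C) : `|c| = ((Num.sqrt (n2 c))%:C)%C.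
Proof. by rewrite normc_def. Qed.
Lemma re_le (c : C) : re c ^+ 2 <= n2 c.
Proof. by rewrite /n2 lerDl sqr_ge0. Qed.
Lemma im_le (c : C) : im c ^+ 2 <= n2 c.
Proof. by rewrite /n2 lerDr sqr_ge0. Qed.

Lemma cs2 (I : finType) (a b c d : I -> R) :
  (\sum_i (a i * b i + c i * d i)) ^+ 2 <=
  (\sum_i (a i ^+ 2 + c i ^+ 2)) * (\sum_i (b i ^+ 2 + d i ^+ 2)).
Proof.
set A := \sum_i (a i ^+ 2 + c i ^+ 2).
set B := \sum_i (b i ^+ 2 + d i ^+ 2).
set X := \sum_i (a i * b i + c i * d i).
have A0 : 0 <= A by apply: sumr_ge0 => i _; rewrite addr_ge0 // sqr_ge0.
have B0 : 0 <= B by apply: sumr_ge0 => i _; rewrite addr_ge0 // sqr_ge0.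
have [Az|Ap] := eqVneq A 0.
  have h := psumr_eq0P (fun i _ => addr_ge0 (sqr_ge0 (a i)) (sqr_ge0 (c i))) Az.
  have -> : X = 0.
    rewrite /X big1 // => i _.
    move: (h i isT) => /eqP; rewrite paddr_eq0 ?sqr_ge0 // !sqrf_eq0.
    by case/andP => /eqP -> /eqP ->; rewrite !mul0r addr0.
  by rewrite Az expr0n /= mul0r.
have Ap' : 0 < A by rewrite lt_def Ap A0.
have H : 0 <= \sum_i ((X * a i - A * b i) ^+ 2 + (X * c i - A * d i) ^+ 2).
  by apply: sumr_ge0 => i _; rewrite addr_ge0 // sqr_ge0.
have E : forall i, (X * a i - A * b i) ^+ 2 + (X * c i - A * d i) ^+ 2 =
   X ^+ 2 * (a i ^+ 2 + c i ^+ 2) + (- (2 * X * A)) * (a i * b i + c i * d i)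
   + A ^+ 2 * (b i ^+ 2 + d i ^+ 2).
  by move=> i; ring.
rewrite (eq_bigr _ (fun i _ => E i)) !big_split /= -!mulr_sumr -/A -/B -/X in H.
nra.
Qed.
End S.

Section V.
Variable R : realType.
Local Notation C := (R[i]).
Local Notation re := (@complex.Re R).
Local Notation im := (@complex.Im R).
Variable m : nat.
Implicit Types v w : 'cV[C]_m.

Definition vn2 v : R := \sum_i n2 (v i 0).
Definition ipr v w : R := \sum_i (re (v i 0) * re (w i 0) + im (v i 0) * im (w i 0)).
Definition vnorm v : R := Num.sqrt (vn2 v).

Lemma vn2_ge0 v : 0 <= vn2 v. Proof. by apply: sumr_ge0 => i _; apply: n2_ge0. Qed.
Lemma vn2_eq0 v : vn2 v = 0 -> v = 0.
Proof.
move=> h; apply/matrixP => i j; rewrite ord1 mxE.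
by have := psumr_eq0P (fun i _ => n2_ge0 (v i 0)) h (i:=i) isT => /n2_eq0.
Qed.
Lemma vn2_0 : vn2 0 = 0.
Proof. by rewrite /vn2 big1 // => i _; rewrite mxE /n2 expr0n /= addr0. Qed.
Lemma vn2_ipr v : vn2 v = ipr v v.
Proof. by apply: eq_bigr => i _; rewrite /n2 !expr2. Qed.
Lemma ipr_cs v w : ipr v w ^+ 2 <= vn2 v * vn2 w.
Proof. exact: cs2. Qed.
Lemma vn2D v w : vn2 (v + w) = vn2 v + 2 * ipr v w + vn2 w.
Proof.
rewrite /vn2 /ipr mulr_sumr -!big_split /=; apply: eq_bigr => i _.
rewrite !mxE /n2 cReD cImD; ring.
Qed.
Lemma vn2Z (c : C) v : vn2 (c *: v) = n2 c * vn2 v.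
Proof. by rewrite /vn2 mulr_sumr; apply: eq_bigr => i _; rewrite mxE n2M. Qed.
Lemma vn2N v : vn2 (- v) = vn2 v.
Proof. by apply: eq_bigr => i _; rewrite mxE /n2 cReN cImN !sqrrN. Qed.
Lemma vnorm_ge0 v : 0 <= vnorm v. Proof. exact: sqrtr_ge0. Qed.
Lemma vnorm_sq v : vnorm v ^+ 2 = vn2 v. Proof. exact: sqr_sqrtr (vn2_ge0 v). Qed.
Lemma ipr_le v w : ipr v w <= vnorm v * vnorm w.
Proof.
have h := ipr_cs v w; rewrite -!vnorm_sq -exprMn in h.
have : 0 <= vnorm v * vnorm w by rewrite mulr_ge0 // vnorm_ge0.
move=> h2; exact: sq_le h h2.
Qed.
Lemma vnormD v w : vnorm (v + w) <= vnorm v + vnorm w.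
Proof.
rewrite -(ler_pXn2r (n:=2)) ?nnegrE ?addr_ge0 ?vnorm_ge0 //.
rewrite vnorm_sq vn2D sqrrD !vnorm_sq.
have := ipr_le v w; lra.
Qed.
Lemma vnormZ (c : C) v : vnorm (c *: v) = Num.sqrt (n2 c) * vnorm v.
Proof. by rewrite /vnorm vn2Z sqrtrM // n2_ge0. Qed.
End V.

Section M.
Variable R : realType.
Local Notation C := (R[i]).
Local Notation re := (@complex.Re R).
Local Notation im := (@complex.Im R).
Variable m : nat.
Implicit Types v w : 'cV[C]_m.
Implicit Types A B : 'M[C]_m.

Definition rowf A i : R := \sum_j n2 (A i j).
Definition frob A : R := \sum_i rowf A i.

Lemma row_bound A v i : n2 ((A *m v) i 0) <= 2 * rowf A i * vn2 v.
Proof.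
have hv : vn2 v = \sum_j (re (v j 0) ^+ 2 + im (v j 0) ^+ 2) by [].
have hr : rowf A i = \sum_j (re (A i j) ^+ 2 + im (A i j) ^+ 2) by [].
have h1 : re ((A *m v) i 0) ^+ 2 <= rowf A i * vn2 v.
  rewrite mxE cRe_sum.
  have -> : \sum_j re (A i j * v j 0) =
     \sum_j (re (A i j) * re (v j 0) + (- im (A i j)) * im (v j 0)).
    apply: eq_bigr => j _. by rewrite cReM mulNr.
  apply: le_trans (cs2 _ _ _ _) _.
  by rewrite hv hr; under eq_bigr do rewrite sqrrN.
have h2 : im ((A *m v) i 0) ^+ 2 <= rowf A i * vn2 v.
  rewrite mxE cIm_sum.
  have -> : \sum_j im (A i j * v j 0) =
     \sum_j (re (A i j) * im (v j 0) + im (A i j) * re (v j 0)).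
    by apply: eq_bigr => j _; rewrite cImM.
  apply: le_trans (cs2 _ _ _ _) _.
  by rewrite hv hr; under [X in _ * X]eq_bigr do rewrite addrC.
rewrite /n2; lra.
Qed.

Lemma vn2_mul_bound A v : vn2 (A *m v) <= 2 * frob A * vn2 v.
Proof.
have -> : 2 * frob A * vn2 v = \sum_i (2 * rowf A i * vn2 v).
  by rewrite -mulr_suml -mulr_sumr.
by rewrite {1}/vn2; apply: ler_sum => i _; apply: row_bound.
Qed.

Definition Sset A : set R := [set x | exists v, vn2 v <= 1 /\ x = vn2 (A *m v)].
Definition Sn A : R := sup (Sset A).
Definition nrm A : R := Num.sqrt (Sn A).

Lemma Sset_ne A : Sset A !=set0.
Proof. by exists 0; exists 0; rewrite vn2_0 ler01 mulmx0 vn2_0. Qed.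
Lemma Sset_ub A : has_ubound (Sset A).
Proof.
exists (2 * frob A) => x [v [hv ->]].
apply: le_trans (vn2_mul_bound A v) _.
have f0 : 0 <= frob A by apply: sumr_ge0 => i _; apply: sumr_ge0 => j _; apply: n2_ge0.
have := vn2_ge0 v; nra.
Qed.
Lemma Sn_ub A v : vn2 v <= 1 -> vn2 (A *m v) <= Sn A.
Proof. by move=> hv; apply: (ub_le_sup (Sset_ub A)); exists v. Qed.
Lemma Sn_ge0 A : 0 <= Sn A.
Proof. have h := Sn_ub A (v:=0); rewrite vn2_0 mulmx0 vn2_0 in h; exact: h ler01. Qed.

Lemma n2R (r : R) : n2 ((r%:C)%C) = r ^+ 2.
Proof. by rewrite /n2 /= expr0n /= addr0. Qed.
Lemma n2_1 : n2 (1 : C) = 1.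
Proof. by rewrite /n2 /= expr0n /= addr0 expr1n. Qed.
Lemma n2_0 : n2 (0 : C) = 0.
Proof. by rewrite /n2 /= expr0n /= addr0. Qed.

Lemma Sn_bound A v : vn2 (A *m v) <= Sn A * vn2 v.
Proof.
have [v0|vn0] := eqVneq (vn2 v) 0.
  by rewrite (vn2_eq0 v0) mulmx0 vn2_0 mulr0.
have vp : 0 < vn2 v by rewrite lt_def vn0 vn2_ge0.
pose c : C := (((Num.sqrt (vn2 v))^-1)%:C)%C.
have hc : n2 c = (vn2 v)^-1 by rewrite n2R exprVn sqr_sqrtr // vn2_ge0.
have := Sn_ub A (v := c *: v).
rewrite vn2Z hc mulVf // lexx -scalemxAr vn2Z hc => /(_ isT) h.
by rewrite ler_pdivrMl // mulrC in h.
Qed.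

Lemma nrm_ge0 A : 0 <= nrm A. Proof. exact: sqrtr_ge0. Qed.
Lemma nrm_sq A : nrm A ^+ 2 = Sn A. Proof. exact: sqr_sqrtr (Sn_ge0 A). Qed.

Lemma nrm_bound A v : vnorm (A *m v) <= nrm A * vnorm v.
Proof. by rewrite /vnorm /nrm -sqrtrM ?Sn_ge0 // ler_wsqrtr // Sn_bound. Qed.

Lemma vnorm_le1 v : vn2 v <= 1 -> vnorm v <= 1.
Proof. by move=> h; rewrite -sqrtr1 ler_wsqrtr. Qed.

Lemma nrm_bound1 A v : vn2 v <= 1 -> vnorm (A *m v) <= nrm A.
Proof.
move=> h; apply: le_trans (nrm_bound A v) _.
have := vnorm_le1 h; have := nrm_ge0 A; have := vnorm_ge0 v; nra.
Qed.

Lemma nrm_le A k : 0 <= k -> (forall v, vn2 v <= 1 -> vnorm (A *m v) <= k) -> nrm A <= k.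
Proof.
move=> k0 h.
have : Sn A <= k ^+ 2.
  apply: ge_sup (Sset_ne A) _ => x [v [hv ->]].
  have := h v hv; rewrite -vnorm_sq; have := vnorm_ge0 (A *m v); nra.
by move=> /ler_wsqrtr; rewrite sqrtr_sqr ger0_norm.
Qed.

Lemma nrmD A B : nrm (A + B) <= nrm A + nrm B.
Proof.
apply: nrm_le; first by rewrite addr_ge0 ?nrm_ge0.
move=> v hv; rewrite mulmxDl; apply: le_trans (vnormD _ _) _.
by rewrite lerD ?nrm_bound1.
Qed.

Lemma nrmM A B : nrm (A *m B) <= nrm A * nrm B.
Proof.
apply: nrm_le; first by rewrite mulr_ge0 ?nrm_ge0.
move=> v hv; rewrite -mulmxA; apply: le_trans (nrm_bound _ _) _.
by rewrite ler_wpM2l ?nrm_ge0 ?nrm_bound1.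
Qed.

Lemma nrmZle (c : C) A : nrm (c *: A) <= Num.sqrt (n2 c) * nrm A.
Proof.
apply: nrm_le; first by rewrite mulr_ge0 ?nrm_ge0 ?sqrtr_ge0.
move=> v hv; rewrite -scalemxAl vnormZ.
by rewrite ler_wpM2l ?sqrtr_ge0 ?nrm_bound1.
Qed.

Lemma nrmZ (c : C) A : nrm (c *: A) = Num.sqrt (n2 c) * nrm A.
Proof.
apply/le_anti; rewrite nrmZle /=.
have [->|c0] := eqVneq c 0; first by rewrite n2_0 sqrtr0 mul0r nrm_ge0.
have h := nrmZle c^-1 (c *: A).
rewrite scalerA mulVf // scale1r in h.
have ab : Num.sqrt (n2 c) * Num.sqrt (n2 c^-1) = 1.
  by rewrite -sqrtrM ?n2_ge0 // -n2M mulfV // n2_1 sqrtr1.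
have := ler_wpM2l (sqrtr_ge0 (n2 c)) h.
by rewrite mulrA ab mul1r.
Qed.

Lemma vn2_delta j : vn2 (delta_mx j 0 : 'cV[C]_m) = 1.
Proof.
rewrite /vn2 (bigD1 j) //= big1 => [|k kj]; first by rewrite mxE !eqxx n2_1 addr0.
by rewrite mxE (negbTE kj) n2_0.
Qed.

Lemma entry_le A i j : n2 (A i j) <= Sn A.
Proof.
have h := Sn_bound A (delta_mx j 0); rewrite vn2_delta mulr1 -colE in h.
apply: le_trans h; rewrite /vn2 (bigD1 i) //= mxE lerDl.
by apply: sumr_ge0 => k _; apply: n2_ge0.
Qed.

Lemma nrm_eq0 A : nrm A = 0 -> A = 0.
Proof.
move=> /eqP; rewrite sqrtr_eq0 => h.
apply/matrixP => i j; rewrite mxE; apply: n2_eq0.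
apply/le_anti; rewrite n2_ge0 andbT; apply: le_trans (entry_le A i j) h.
Qed.

Lemma re_le_nrm A i j : `|re (A i j)| <= nrm A.
Proof.
have h : re (A i j) ^+ 2 <= nrm A ^+ 2.
  by rewrite nrm_sq; apply: le_trans (re_le _) (entry_le A i j).
by rewrite sq_le ?nrm_ge0 // -normrX ger0_norm ?sqr_ge0.
Qed.
Lemma im_le_nrm A i j : `|im (A i j)| <= nrm A.
Proof.
have h : im (A i j) ^+ 2 <= nrm A ^+ 2.
  by rewrite nrm_sq; apply: le_trans (im_le _) (entry_le A i j).
by rewrite sq_le ?nrm_ge0 // -normrX ger0_norm ?sqr_ge0.
Qed.
End M.

Section St.
Variable R : realType.
Local Notation C := (R[i]).
Local Notation re := (@complex.Re R).
Local Notation im := (@complex.Im R).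
Variable m : nat.
Implicit Types v w : 'cV[C]_m.
Implicit Types A B : 'M[C]_m.

Definition star A : 'M[C]_m := map_mx (@conjc R) A^T.
Definition cip v w : C := \sum_i conjc (v i 0) * w i 0.

Lemma starK A : star (star A) = A.
Proof. by apply/matrixP => i j; rewrite !mxE conjcK. Qed.
Lemma starD A B : star (A + B) = star A + star B.
Proof. by apply/matrixP => i j; rewrite !mxE rmorphD. Qed.
Lemma starZ (c : C) A : star (c *: A) = conjc c *: star A.
Proof. by apply/matrixP => i j; rewrite !mxE rmorphM. Qed.
Lemma starM A B : star (A *m B) = star B *m star A.
Proof.
apply/matrixP => i j; rewrite !mxE rmorph_sum; apply: eq_bigr => k _.
by rewrite !mxE rmorphM mulrC.
Qed.

Lemma ipr_cip v w : ipr v w = re (cip v w).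
Proof.
rewrite /cip cRe_sum; apply: eq_bigr => i _.
rewrite cReM cRej cImj; ring.
Qed.

Lemma cip_adj A v w : cip (A *m v) w = cip v (star A *m w).
Proof.
rewrite /cip; under eq_bigr do rewrite mxE rmorph_sum mulr_suml.
rewrite exchange_big; apply: eq_bigr => j _; rewrite !mxE mulr_sumr.
by apply: eq_bigr => i _; rewrite !mxE rmorphM; ring.
Qed.

Lemma ipr_adj A v w : ipr (A *m v) w = ipr v (star A *m w).
Proof. by rewrite !ipr_cip cip_adj. Qed.

Lemma nrm_cstar_le A : nrm A ^+ 2 <= nrm (star A *m A).
Proof.
rewrite nrm_sq; apply: ge_sup (Sset_ne A) _ => x [v [hv ->]].
rewrite vn2_ipr ipr_adj mulmxA.
apply: le_trans (ipr_le _ _) _.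
have h1 := vnorm_le1 hv.
have h2 := nrm_bound1 (star A *m A) hv.
apply: le_trans (ler_wpM2r (vnorm_ge0 _) h1) _; by rewrite mul1r.
Qed.

Lemma nrm_star_le A : nrm A <= nrm (star A).
Proof.
have h1 := nrm_cstar_le A; have h2 := nrmM (star A) A.
have := nrm_ge0 A; have := nrm_ge0 (star A).
have [->|nz] := eqVneq (nrm A) 0; first by move=> h _.
move=> a0 b0; have ap : 0 < nrm A by rewrite lt_def nz.
move: (le_trans h1 h2) => h; rewrite expr2 in h.
by rewrite -(ler_pM2r ap).
Qed.

Lemma nrm_star A : nrm (star A) = nrm A.
Proof.
apply/le_anti/andP; split; last exact: nrm_star_le.
by have := nrm_star_le (star A); rewrite starK.
Qed.

Lemma nrm_cstar A : nrm (star A *m A) = nrm A ^+ 2.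
Proof.
apply/le_anti; rewrite nrm_cstar_le andbT.
by apply: le_trans (nrmM _ _) _; rewrite nrm_star expr2.
Qed.
End St.

Lemma real_complete (R : realType) (u : nat -> R) :
  (forall e : R, 0 < e -> exists N, forall p q, (N <= p)%N -> (N <= q)%N -> `|u p - u q| < e) ->
  exists l : R, forall e : R, 0 < e -> exists N, forall n, (N <= n)%N -> `|u n - l| < e.
Proof.
move=> hc.
have [N1 h1] := hc 1 ltr01.
pose E := [set x : R | exists N, forall n, (N <= n)%N -> x <= u n].
have Ene : E !=set0.
  exists (u N1 - 1); exists N1 => n hn.
  have := h1 n N1 hn (leqnn _); rewrite ltr_norml => /andP[a b]; lra.
have Eub : has_ubound E.
  exists (u N1 + 1) => x [N hN].
  have := hN (maxn N N1) (leq_maxl _ _).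
  have := h1 (maxn N N1) N1 (leq_maxr _ _) (leqnn _); rewrite ltr_norml => /andP[a b]; lra.
exists (sup E) => e e0.
have e2 : 0 < e / 2 by rewrite divr_gt0.
have [N hN] := hc (e / 2) e2.
have la : u N - e / 2 <= sup E.
  apply: (ub_le_sup Eub); exists N => n hn.
  have := hN n N hn (leqnn _); rewrite ltr_norml => /andP[a b]; lra.
have lb : sup E <= u N + e / 2.
  apply: ge_sup Ene _ => x [N' hN'].
  have := hN' (maxn N' N) (leq_maxl _ _).
  have := hN (maxn N' N) N (leq_maxr _ _) (leqnn _); rewrite ltr_norml => /andP[a b]; lra.
exists N => n hn.
have := hN n N hn (leqnn _); rewrite !ltr_norml => /andP[a b].
apply/andP; split; lra.
Qed.

Lemma sq_bnd (R : realFieldType) (x d : R) : - d < x -> x < d -> x ^+ 2 <= d ^+ 2.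
Proof. move=> h1 h2; nra. Qed.

Lemma cmp_aux (R : realFieldType) (M d : R) : 0 <= M -> 0 < d ->
  2 * (M * (M * (2 * d ^+ 2))) < (2 * d * (M + 1)) ^+ 2.
Proof.
move=> hM hd; rewrite -subr_gt0.
have -> : (2 * d * (M + 1)) ^+ 2 - 2 * (M * (M * (2 * d ^+ 2))) = 4 * d ^+ 2 * (2 * M + 1) by ring.
by rewrite mulr_gt0 ?mulr_gt0 ?exprn_gt0 // ltr_wpDl ?mulr_ge0.
Qed.

Section Comp.
Variable R : realType.
Local Notation C := (R[i]).
Local Notation re := (@complex.Re R).
Local Notation im := (@complex.Im R).
Variable m : nat.
Implicit Types A B : 'M[C]_m.

Lemma reB A B i j : re ((A - B) i j) = re (A i j) - re (B i j).
Proof. by rewrite !mxE cReD cReN. Qed.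
Lemma imB A B i j : im ((A - B) i j) = im (A i j) - im (B i j).
Proof. by rewrite !mxE cImD cImN. Qed.

Lemma Sn_frob A : Sn A <= 2 * frob A.
Proof.
apply: ge_sup (Sset_ne A) _ => x [v [hv ->]].
apply: le_trans (vn2_mul_bound A v) _.
have f0 : 0 <= frob A by apply: sumr_ge0 => i _; apply: sumr_ge0 => j _; apply: n2_ge0.
have := vn2_ge0 v; nra.
Qed.

Lemma mx_complete (u : nat -> 'M[C]_m) :
  (forall e : R, 0 < e -> exists N, forall p q, (N <= p)%N -> (N <= q)%N ->
         nrm (u p - u q) < e) ->
  exists L, forall e : R, 0 < e -> exists N, forall n, (N <= n)%N -> nrm (u n - L) < e.
Proof.
move=> hc.
have hre : forall ij : 'I_m * 'I_m, exists l : R, forall e : R, 0 < e -> exists N,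
    forall n, (N <= n)%N -> `|re (u n ij.1 ij.2) - l| < e.
  move=> [i j]; apply: real_complete => e e0.
  have [N hN] := hc e e0; exists N => p q hp hq.
  by rewrite -reB; apply: le_lt_trans (re_le_nrm _ _ _) (hN p q hp hq).
have him : forall ij : 'I_m * 'I_m, exists l : R, forall e : R, 0 < e -> exists N,
    forall n, (N <= n)%N -> `|im (u n ij.1 ij.2) - l| < e.
  move=> [i j]; apply: real_complete => e e0.
  have [N hN] := hc e e0; exists N => p q hp hq.
  by rewrite -imB; apply: le_lt_trans (im_le_nrm _ _ _) (hN p q hp hq).
have [lr hlr] := fin_all_exists hre.
have [li hli] := fin_all_exists him.
exists (\matrix_(i, j) ((lr (i, j)) +i* (li (i, j)))%C) => e e0.
pose M : R := m%:R.
have M0 : 0 <= M by rewrite ler0n.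
pose d := e / (2 * (M + 1)).
have d0 : 0 < d by rewrite divr_gt0 // mulr_gt0 // ltr_wpDl.
have de : e = 2 * d * (M + 1).
  by rewrite /d; field; rewrite natr1 pnatr_eq0.
have hr ij : exists N, forall n, (N <= n)%N -> `|re (u n ij.1 ij.2) - lr ij| < d.
  exact: hlr ij d d0.
have hi ij : exists N, forall n, (N <= n)%N -> `|im (u n ij.1 ij.2) - li ij| < d.
  exact: hli ij d d0.
have [Nr hNr] := fin_all_exists hr.
have [Ni hNi] := fin_all_exists hi.
exists (\max_(ij : 'I_m * 'I_m) maxn (Nr ij) (Ni ij)) => n hn.
have hent : forall i j, n2 ((u n - \matrix_(i, j) ((lr (i, j)) +i* (li (i, j)))%C) i j) <= 2 * d ^+ 2.
  move=> i j.
  have hm : (maxn (Nr (i, j)) (Ni (i, j)) <= n)%N.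
    apply: leq_trans hn; exact: (leq_bigmax (i, j)).
  have a := hNr (i, j) n (leq_trans (leq_maxl _ _) hm).
  have b := hNi (i, j) n (leq_trans (leq_maxr _ _) hm).
  rewrite /n2 reB imB !mxE /=.
  rewrite ltr_norml in a; rewrite ltr_norml in b.
  case/andP: a => a1 a2; case/andP: b => b1 b2.
  have := sq_bnd a1 a2; have := sq_bnd b1 b2; lra.
set D := u n - _ in hent *.
have hf : frob D <= M * (M * (2 * d ^+ 2)).
  apply: (@le_trans _ _ (\sum_(i < m) \sum_(j < m) 2 * d ^+ 2)).
    by rewrite /frob /rowf; apply: ler_sum => i _; apply: ler_sum => j _; apply: hent.
  by rewrite !sumr_const card_ord /M !mulr_natl.
have hS : Sn D < e ^+ 2.
  have h := cmp_aux M0 d0; rewrite -de in h.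
  apply: le_lt_trans (Sn_frob D) _; apply: le_lt_trans h.
  by rewrite ler_pM2l.
have h := ltr_sqrt (Sn D) (exprn_gt0 2 e0).
rewrite sqrtr_sqr ger0_norm ?(ltW e0) // in h.
by rewrite /nrm h.
Qed.
End Comp.

Lemma MB_ax (R : realType) (n : nat) :
  @cstar_axioms R ('M[R[i]]_n.+1) (@star R n.+1) (@nrm R n.+1).
Proof.
split; first exact: starK.
split; first exact: starD.
split; first by move=> c x; rewrite conjE starZ.
split; first by move=> x y; rewrite -!mulmxE starM.
split; first exact: nrm_eq0.
split; first exact: nrmD.
split; first by move=> c x; rewrite nrmZ normc_n2 rmorphM.
split; first by move=> x y; rewrite -mulmxE nrmM.
split; first by move=> x; rewrite -mulmxE nrm_cstar.
exact: mx_complete.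
Qed.

Definition MB (R : realType) (n : nat) : cstar_alg R :=
  @CStarAlg R ('M[R[i]]_n.+1) (@star R n.+1) (@nrm R n.+1) (MB_ax R n).

Section Proj.
Variable R : realType.
Variable N : nat.
Local Notation M := ('M[R[i]]_N.+1).
Definition isproj (x : M) := star x = x /\ x * x = x.
Lemma star1 : star (1 : M) = 1.
Proof. change (star (1%:M : M) = 1%:M); apply/matrixP => i j; by rewrite !mxE eq_sym conjc_nat. Qed.
Lemma star0 : star (0 : M) = 0.
Proof. by apply/matrixP => i j; rewrite !mxE conjc0. Qed.
Lemma starN (x : M) : star (- x) = - star x.
Proof. by apply/matrixP => i j; rewrite !mxE rmorphN. Qed.
Lemma proj0 : isproj 0. Proof. by split; rewrite ?star0 ?mulr0. Qed.
Lemma proj1 : isproj 1. Proof. by split; rewrite ?star1 ?mulr1. Qed.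
Lemma projC x : isproj x -> isproj (1 - x).
Proof.
case=> h1 h2; split; first by rewrite starD starN star1 h1.
by rewrite mulrBl !mulrBr !mul1r !mulr1 h2 subrr subr0.
Qed.
Lemma projS (b c : bool) x : isproj x -> isproj (b%:R * x * c%:R).
Proof. by move=> hx; case: b; case: c; rewrite ?mul1r ?mulr1 ?mul0r ?mulr0 //; apply: proj0. Qed.
Lemma projB (b : bool) : isproj (b%:R). Proof. by case: b; [apply: proj1|apply: proj0]. Qed.
End Proj.

Section NC.
Variable R : realType.
Variable X : finType.
Variables a b : X.
Hypothesis ab : a != b.
Local Notation M := ('M[R[i]]_2).
Variables P Q : M.

Definition K (T : M) (x y : X) : M :=
  if x == y then (if (x == a) || (x == b) then T else 1)
  else if ((x == a) && (y == b)) || ((x == b) && (y == a)) then 1 - T else 0.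

Lemma K_sym T x y : K T x y = K T y x.
Proof.
rewrite /K eq_sym; case: eqP => [->//|_].
by rewrite orbC (andbC (y == a)) (andbC (y == b)).
Qed.

Lemma K_row T x : \sum_y K T x y = 1.
Proof.
have ba : b != a by rewrite eq_sym.
have [->|xa] := eqVneq x a.
  rewrite (bigD1 a) // (bigD1 b) //= big1 => [|y /andP[ya yb]].
    by rewrite /K !eqxx (negbTE ab) /= addr0 addrC subrK.
  by rewrite /K eq_sym (negbTE ya) (negbTE yb) (negbTE ab) /= andbF.
have [->|xb] := eqVneq x b.
  rewrite (bigD1 b) // (bigD1 a) //= big1 => [|y /andP[yb ya]].
    by rewrite /K !eqxx (negbTE ab) (negbTE ba) /= addr0 addrC subrK.
  by rewrite /K eq_sym (negbTE ya) (negbTE yb) (negbTE ba) /= andbF.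
rewrite (bigD1 x) //= big1 => [|y yx].
  by rewrite /K eqxx (negbTE xa) (negbTE xb) addr0.
by rewrite /K eq_sym (negbTE yx) (negbTE xa) (negbTE xb).
Qed.

Lemma K_col T x : \sum_y K T y x = 1.
Proof. by rewrite -(K_row T x); apply: eq_bigr => y _; rewrite K_sym. Qed.

Lemma K_proj T x y : isproj T -> isproj (K T x y).
Proof.
move=> hT; rewrite /K.
case: (x == y); first by case: (_ || _) => //; apply: proj1.
by case: (_ || _); [apply: projC | apply: proj0].
Qed.

Definition hnc (u v : seq X) : M :=
  match u, v with
  | [::], [::] => 1
  | [:: x], [:: y] => (x == y)%:R
  | x1 :: x2 :: du, y1 :: y2 :: dv =>
      (x1 == y1)%:R * K (if x1 == a then P else Q) x2 y2 * (du == dv)%:R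
  | _, _ => 0
  end.

Lemma sum_delta (x : X) : \sum_(y : X) ((x == y)%:R : M) = 1.
Proof.
rewrite (bigD1 x) //= eqxx big1 ?addr0 // => y.
by rewrite eq_sym => /negbTE ->.
Qed.
Lemma sum_delta' (x : X) : \sum_(y : X) ((y == x)%:R : M) = 1.
Proof. by rewrite (bigD1 x) //= eqxx big1 ?addr0 // => y /negbTE ->. Qed.

Hypothesis hP : isproj P.
Hypothesis hQ : isproj Q.

Lemma hnc_proj u v : isproj (hnc u v).
Proof.
case: u v => [|x1 [|x2 du]] [|y1 [|y2 dv]] /=; try apply: proj0; try apply: projB.
  exact: proj1.
by apply: projS; apply: K_proj; case: (x1 == a).
Qed.

Lemma hnc_r1 u v x : size u = size v -> hnc u v = \sum_y hnc (rcons u x) (rcons v y).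
Proof.
case: u v => [|x1 [|x2 du]] [|y1 [|y2 dv]] //= hs.
- by rewrite sum_delta.
- by rewrite -mulr_suml -mulr_sumr K_row !mulr1.
- under eq_bigr do rewrite eqseq_rcons.
  case: (du == dv) => /=; last by rewrite mulr0 big1 // => y _; rewrite mulr0.
  by rewrite -mulr_sumr sum_delta.
Qed.

Lemma hnc_r2 u v x : size u = size v -> hnc u v = \sum_z hnc (rcons u z) (rcons v x).
Proof.
case: u v => [|x1 [|x2 du]] [|y1 [|y2 dv]] //= hs.
- by rewrite sum_delta'.
- by rewrite -mulr_suml -mulr_sumr K_col !mulr1.
- under eq_bigr do rewrite eqseq_rcons.
  case: (du == dv) => /=; last by rewrite mulr0 big1 // => y _; rewrite mulr0.
  by rewrite -mulr_sumr sum_delta'.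
Qed.

Lemma hnc_rel : @AX_relations R X (MB R 1) hnc.
Proof.
split.
- by [].
- by move=> u v _; case: (hnc_proj u v).
- by move=> u v _; case: (hnc_proj u v).
- by move=> u v x hs; split; [apply: hnc_r1 | apply: hnc_r2].
Qed.
End NC.

Section PQ.
Variable R : realType.
Local Notation M := ('M[R[i]]_2).
Definition Pm : M := delta_mx 0 0.
Definition half : R[i] := (2%:R : R[i])^-1.
Definition Qm : M := \matrix_(i, j) half.
Definition i1 : 'I_2 := @Ordinal 2 1 isT.

Lemma two_neq0 : (2%:R : R[i]) != 0. Proof. by rewrite pnatr_eq0. Qed.

Lemma half_half : half * half *+ 2 = half.
Proof. by rewrite /half -mulr_natr -mulrA mulVf ?mulr1 // two_neq0. Qed.
Lemma half_conj : conjc half = half.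
Proof. by rewrite /half conjc_inv conjc_nat. Qed.
Lemma half_neq0 : half != 0.
Proof. by rewrite /half invr_eq0 two_neq0. Qed.

Lemma Pm_proj : isproj Pm.
Proof.
split; last by rewrite -mulmxE /Pm mul_delta_mx.
by apply/matrixP => i j; rewrite !mxE conjc_nat andbC.
Qed.

Lemma Qm_proj : isproj Qm.
Proof.
split.
  by apply/matrixP => i j; rewrite !mxE half_conj.
rewrite -mulmxE; apply/matrixP => i j; rewrite !mxE.
under eq_bigr do rewrite !mxE.
by rewrite sumr_const card_ord half_half.
Qed.

Lemma PQ_neq : Pm * Qm <> Qm * Pm.
Proof.
rewrite -!mulmxE => /matrixP /(_ 0 i1); rewrite !mxE !big_ord_recl !big_ord0 !mxE /=.
rewrite ?mul1r ?mul0r ?mulr0 ?addr0 ?add0r => /eqP; rewrite (negbTE half_neq0).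
by [].
Qed.
End PQ.

Section ID.
Variable R : realType.
Variable X : finType.
Variables a b : X.
Hypothesis ab : a != b.
Variable n : nat.
Local Notation M := ('M[R[i]]_n.+1).

Definition tau (x : X) := if x == a then b else if x == b then a else x.
Lemma tauK x : tau (tau x) = x.
Proof.
rewrite /tau; have [->|xa] := eqVneq x a; first by rewrite eq_sym (negbTE ab) eqxx.
have [->|xb] := eqVneq x b; first by rewrite eqxx.
by rewrite (negbTE xa) (negbTE xb).
Qed.

Fixpoint sr (j : nat) (w : seq X) : seq X :=
  match w with [::] => [::] | x :: w' => (if size w' == j then tau x else x) :: sr j w' end.
Definition sigm j u := rev (sr j (rev u)).

Lemma sig_rcons j u x : sigm j (rcons u x) = rcons (sigm j u) (if size u == j then tau x else x).
Proof. by rewrite /sigm rev_rcons /= size_rev rev_cons. Qed.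

Lemma sr_small j w : (size w <= j)%N -> sr j w = w.
Proof. by elim: w => //= x w IH hs; rewrite IH ?(ltnW hs) // ltn_eqF. Qed.

Lemma sig_small j u : (size u <= j)%N -> sigm j u = u.
Proof. by move=> h; rewrite /sigm sr_small ?size_rev ?revK. Qed.

Lemma sig_nil j : sigm j [::] = [::]. Proof. by []. Qed.

Definition dg (p : 'I_n.+1 -> bool) : M := \matrix_(j, k) ((j == k) && p j)%:R.

Lemma dg_proj p : isproj (dg p).
Proof.
split.
  apply/matrixP => j k; rewrite !mxE conjc_nat eq_sym.
  by case: eqP => [->|].
rewrite -mulmxE; apply/matrixP => j k; rewrite !mxE (bigD1 j) //= big1.
  rewrite !mxE eqxx /= addr0; by case: (p j); rewrite ?mul1r ?mul0r ?andbF.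
by move=> l lj; rewrite !mxE eq_sym (negbTE lj) mul0r.
Qed.

Definition hid (u v : seq X) : M := dg (fun j => v == sigm j u).

Lemma hid_entry u v j k : hid u v j k = ((j == k) && (v == sigm j u))%:R.
Proof. by rewrite mxE. Qed.

Lemma sum_d (c : X) : \sum_(y : X) ((y == c)%:R : R[i]) = 1.
Proof. by rewrite (bigD1 c) //= eqxx big1 ?addr0 // => y /negbTE ->. Qed.

Lemma hid_r1 u v x : hid u v = \sum_y hid (rcons u x) (rcons v y).
Proof.
apply/matrixP => j k; rewrite summxE !mxE.
under eq_bigr do rewrite mxE sig_rcons eqseq_rcons.
case: (j == k) => /=; last by rewrite big1.
case: (v == sigm j u) => /=; last by rewrite big1.
exact/esym/sum_d.
Qed.

Lemma hid_r2 u v x : hid u v = \sum_z hid (rcons u z) (rcons v x).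
Proof.
apply/matrixP => j k; rewrite summxE !mxE.
under eq_bigr do rewrite mxE sig_rcons eqseq_rcons.
case: (j == k) => /=; last by rewrite big1.
case: (v == sigm j u) => /=; last by rewrite big1.
case: (size u == j).
  have e : forall z, (x == tau z) = (z == tau x).
    by move=> z; apply/eqP/eqP => [->|->]; rewrite tauK.
  under eq_bigr do rewrite e.
  exact/esym/sum_d.
under eq_bigr do rewrite eq_sym.
exact/esym/sum_d.
Qed.

Lemma hid_rel : @AX_relations R X (MB R n) hid.
Proof.
split.
- change (dg (fun j => [::] == sigm j [::]) = 1%:M).
  by apply/matrixP => j k; rewrite !mxE andbT.
- by move=> u v _; case: (dg_proj (fun j => v == sigm j u)).
- by move=> u v _; case: (dg_proj (fun j => v == sigm j u)).
- by move=> u v x hs; split; [apply: hid_r1 | apply: hid_r2].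
Qed.

Lemma nseqSr (i : nat) : nseq i.+1 a = rcons (nseq i a) a.
Proof. by elim: i => //= i ->. Qed.

Lemma eval_e (i j : nat) : (rcons (nseq i a) b == sigm j (nseq i.+1 a)) = (i == j).
Proof.
rewrite nseqSr sig_rcons size_nseq eqseq_rcons.
have [<-|ij] := eqVneq i j.
  by rewrite sig_small ?size_nseq // /tau !eqxx.
by rewrite [b == a]eq_sym (negbTE ab) andbF.
Qed.
End ID.

Lemma size_nseq_rcons (X : Type) (a b : X) (i : nat) :
  size (nseq i.+1 a) = size (rcons (nseq i a) b).
Proof. by rewrite size_rcons !size_nseq. Qed.

Unset Implicit Arguments.
Theorem proposition3p7 (R : realType) (X : finType) (A : cstar_alg R)
    (g : seq X -> seq X -> A) :
  (1 < #|X|)%N -> is_universal_AX g ->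
  noncommutative A /\ infinite_dimensional A.
Proof.
move=> hX [hg hU].
have /card_gt1P [a [b [_ _ ab]]] := hX.
have ba : b != a by rewrite eq_sym.
split.
  have [[f [hf hfg]] _] := hU (MB R 1) (hnc a b (Pm R) (Qm R))
     (hnc_rel ab (Pm_proj R) (Qm_proj R)).
  exists (g [:: a; a] [:: a; a]), (g [:: b; a] [:: b; a]) => E.
  case: hf => fD fZ fM f1 fS.
  have := congr1 f E; rewrite !fM !hfg //= /K !eqxx /= (negbTE ba) !mul1r !mulr1.
  exact: PQ_neq.
move=> n.
have [[f [hf hfg]] _] := hU (MB R n) (@hid R X a b n) (@hid_rel R X a b ab n).
case: hf => fD fZ fM f1 fS.
pose e (i : 'I_n) := g (nseq i.+1 a) (rcons (nseq i a) b).
exists e => c hc i.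
have f0 : f 0 = 0.
  have h := fD 0 0; rewrite addr0 in h; apply: (addrI (f 0)); by rewrite -h addr0.
have fs : f (\sum_(k < n) c k *: e k) = \sum_(k < n) c k *: f (e k).
  by apply: (big_rec2 (fun x y => f x = y)) => [|k x y _ <-]; rewrite ?f0 // fD fZ.
rewrite hc f0 in fs.
pose w := widen_ord (leqnSn n) i.
have := congr1 (fun M : 'M[R[i]]_n.+1 => M w w) fs.
rewrite mxE summxE /=.
have hent : forall k : 'I_n, f (e k) w w = (k == i)%:R.
  move=> k; rewrite /e hfg; last exact: size_nseq_rcons.
  by rewrite hid_entry eqxx /= eval_e.
under eq_bigr do rewrite mxE hent.
rewrite (bigD1 i) //= big1 => [|k ki].
  by rewrite eqxx mulr1 addr0.
by rewrite (negbTE ki) mulr0.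
Qed.
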